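(* Fix $k\in\mathbb N$, $\alpha\in\{0,1,\ldots,k\}$ and $N\in{}^*\mathbb N\setminus\mathbb N$, and let $M_2=\lfloor N-\sqrt N\rfloor+1$. For every $i\in{}^*\mathbb N\setminus\mathbb N$ with $i\le M_2$, we have $\frac{a_i}{b_i}\approx 1$, where $a_i=\binom{N-k}{i-\alpha}\big/\binom{N}{i}$ and $b_i=\left(\frac iN\right)^\alpha\left(1-\frac iN\right)^{k-\alpha}$.
   Context: Work in a nonstandard extension of the reals; $\lfloor\cdot\rfloor$ is the (extended) greatest integer function, and binomial coefficients with hypernatural arguments are defined by transfer. $x\approx y$ means $x-y$ is infinitesimal. *)

(* Defs.v *)
From Stdlib Require Import Reals Lra ZArith Arith.
Open Scope R_scope.

Fixpoint binom (n m : nat) : nat :=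
  match n, m with
  | _, O => 1%nat
  | O, S _ => 0%nat
  | S n', S m' => (binom n' m' + binom n' (S m'))%nat
  end.

Definition M2 (N : nat) : Z := (Int_part (INR N - sqrt (INR N)) + 1)%Z.

Definition a_seq (k alpha N i : nat) : R :=
  INR (binom (N - k) (i - alpha)) / INR (binom N i).

Definition b_seq (k alpha N i : nat) : R :=
  (INR i / INR N) ^ alpha * (1 - INR i / INR N) ^ (k - alpha).

(* Main.v *)
Require Import Defs.
From Stdlib Require Import Reals ZArith Arith Lra Lia Psatz.
Open Scope R_scope.

Lemma binom_gt : forall n m, (n < m)%nat -> binom n m = 0%nat.
Proof.
  induction n as [|n IH]; intros m H; destruct m as [|m]; simpl; try lia; auto.
  rewrite !IH; lia.
Qed.

Lemma binom_C : forall n m, (m <= n)%nat -> INR (binom n m) = C n m.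
Proof.
  induction n as [|n IH]; intros m H.
  - destruct m; [|lia]. unfold C; simpl. field.
  - destruct m as [|m].
    + unfold C. change (binom (S n) 0) with 1%nat. rewrite Nat.sub_0_r. change (fact 0) with 1%nat.
      change (INR 1) with 1. field. apply INR_fact_neq_0.
    + simpl binom. rewrite plus_INR.
      destruct (Nat.eq_dec m n) as [->|Hne].
      * rewrite (binom_gt n (S n)) by lia. rewrite IH by lia.
        unfold C. rewrite !Nat.sub_diag. change (fact 0) with 1%nat. change (INR 1) with 1.
        change (INR 0) with 0. field.
        split; apply INR_fact_neq_0.
      * rewrite !IH by lia. apply pascal. lia.
Qed.

Fixpoint Q (x : R) (j : nat) : R :=
  match j with O => 1 | S j => Q x j * (1 - INR j / x) end.

Lemma Q_bounds : forall x j, 0 < x -> INR j <= x ->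
  1 - INR j ^ 2 / x <= Q x j <= 1.
Proof.
  intros x j Hx. induction j as [|j IH]; intros Hj.
  - simpl. lra.
  - rewrite S_INR in Hj. assert (Hj0 := pos_INR j).
    destruct IH as [IH1 IH2]; [lra|].
    simpl Q. rewrite S_INR.
    set (t := INR j / x).
    assert (Ht0 : 0 <= t) by (unfold t; apply Rmult_le_pos; [lra| left; apply Rinv_0_lt_compat; lra]).
    assert (Ht1 : t < 1) by (unfold t; apply Rmult_lt_reg_r with x; [lra|]; unfold Rdiv; rewrite Rmult_assoc, Rinv_l; lra).
    assert (E1 : INR j ^ 2 / x = INR j * t) by (unfold t; field; lra).
    assert (E2 : (INR j + 1) ^ 2 / x = INR j * t + 2 * t + 1 / x) by (unfold t; field; lra).
    assert (Hix : 0 < 1 / x) by (apply Rdiv_lt_0_compat; lra).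
    rewrite E1 in IH1. rewrite E2.
    split.
    + destruct (Rle_dec 0 (1 - INR j * t)).
      * nra.
      * nra.
    + nra.
Qed.

Lemma fact_Q : forall n j, (0 < n)%nat -> (j <= n)%nat ->
  INR (fact n) = Q (INR n) j * INR n ^ j * INR (fact (n - j)).
Proof.
  intros n j Hn. induction j as [|j IH]; intros Hj.
  - simpl. rewrite Nat.sub_0_r. ring.
  - rewrite IH by lia.
    replace (n - j)%nat with (S (n - S j)) by lia.
    rewrite fact_simpl, mult_INR.
    replace (INR (S (n - S j))) with (INR n - INR j)
      by (rewrite <- minus_INR by lia; f_equal; lia).
    simpl Q. simpl pow.
    assert (INR n <> 0) by (apply not_0_INR; lia).
    field. auto.
Qed.

Lemma ratio_eq : forall k alpha N i, (alpha <= k)%nat -> (alpha <= i)%nat ->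
  (i <= N)%nat -> (k - alpha <= N - i)%nat -> (0 < i)%nat -> (i < N)%nat ->
  Q (INR N) k <> 0 -> Q (INR i) alpha <> 0 -> Q (INR (N - i)) (k - alpha) <> 0 ->
  a_seq k alpha N i / b_seq k alpha N i =
  Q (INR i) alpha * Q (INR (N - i)) (k - alpha) / Q (INR N) k.
Proof.
  intros k alpha N i H1 H2 H3 H4 H5 H6 HQ HQ1 HQ2.
  unfold a_seq, b_seq.
  rewrite !binom_C by lia. unfold C.
  replace (N - k - (i - alpha))%nat with (N - i - (k - alpha))%nat by lia.
  rewrite (fact_Q N k) by lia.
  rewrite (fact_Q i alpha) by lia.
  rewrite (fact_Q (N - i) (k - alpha)) by lia.
  replace (1 - INR i / INR N) with (INR (N - i) / INR N)
    by (rewrite minus_INR by lia; field; apply not_0_INR; lia).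
  assert (HN : INR N <> 0) by (apply not_0_INR; lia).
  assert (Hi : INR i <> 0) by (apply not_0_INR; lia).
  assert (HNi : INR (N - i) <> 0) by (apply not_0_INR; lia).
  assert (Hk : INR N ^ k = INR N ^ alpha * INR N ^ (k - alpha))
    by (rewrite <- pow_add; f_equal; lia).
  rewrite Hk.
  unfold Rdiv. rewrite !Rpow_mult_distr, !pow_inv.
  field.
  repeat split; try apply pow_nonzero; auto; try apply INR_fact_neq_0.
Qed.

Lemma Qd : forall d x k j, 0 < d -> INR k ^ 2 / d + INR k + 1 <= x -> (j <= k)%nat ->
  1 - d <= Q x j <= 1.
Proof.
  intros d x k j Hd Hx Hj.
  assert (Hk0 := pos_INR k). assert (Hjk := le_INR _ _ Hj). assert (Hj0 := pos_INR j).
  assert (Hkd : 0 <= INR k ^ 2 / d) by (unfold Rdiv; apply Rmult_le_pos; [nra | left; apply Rinv_0_lt_compat; lra]).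
  assert (Hx0 : 0 < x) by lra.
  destruct (Q_bounds x j Hx0 ltac:(lra)) as [L U]. split; [|exact U].
  assert (INR j ^ 2 / x <= d); [|lra].
  apply Rmult_le_reg_r with x; [lra|].
  unfold Rdiv. rewrite Rmult_assoc, Rinv_l by lra.
  assert (INR k ^ 2 <= d * x); [|nra].
  assert (E : INR k ^ 2 = d * (INR k ^ 2 / d)) by (field; lra).
  rewrite E at 1. apply Rmult_le_compat_l; lra.
Qed.

Lemma combine : forall u v w d eps, 0 < d -> d <= 1/2 -> d <= eps / 4 ->
  1 - d <= u <= 1 -> 1 - d <= v <= 1 -> 1 - d <= w <= 1 ->
  Rabs (u * v / w - 1) < eps.
Proof.
  intros u v w d eps H1 H2 H3 Hu Hv Hw.
  assert (Hw0 : 0 < w) by lra.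
  set (r := u * v / w).
  assert (Er : r * w = u * v) by (unfold r; field; lra).
  assert (r <= 1 / w) by (apply Rmult_le_reg_r with w; [lra|]; rewrite Er; unfold Rdiv; rewrite Rmult_1_l, Rinv_l by lra; nra).
  assert (1 / w <= 1 + 2 * d) by (apply Rmult_le_reg_r with w; [lra|]; unfold Rdiv; rewrite Rmult_1_l, Rinv_l by lra; nra).
  assert (0 <= r) by (unfold r; unfold Rdiv; apply Rmult_le_pos; [nra | left; apply Rinv_0_lt_compat; lra]).
  assert (r >= u * v) by nra.
  apply Rabs_def1; nra.
Qed.

Theorem mainTheorem9 (k alpha : nat) (Halpha : (alpha <= k)%nat) :
  forall eps : R, 0 < eps ->
  exists n0 : nat, forall N i : nat,
    (n0 <= N)%nat -> (n0 <= i)%nat -> (Z.of_nat i <= M2 N)%Z ->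
    Rabs (a_seq k alpha N i / b_seq k alpha N i - 1) < eps.
Proof.
  intros eps Heps.
  set (d := Rmin (eps / 4) (1 / 2)).
  assert (Hd0 : 0 < d) by (unfold d; apply Rmin_glb_lt; lra).
  assert (Hd1 : d <= 1/2) by apply Rmin_r.
  assert (Hd2 : d <= eps/4) by apply Rmin_l.
  set (K := INR k ^ 2 / d + INR k + 1).
  assert (Hk0 := pos_INR k).
  assert (HK0 : INR k + 1 <= K) by (unfold K; assert (0 <= INR k ^ 2 / d) by (unfold Rdiv; apply Rmult_le_pos; [nra | left; apply Rinv_0_lt_compat; lra]); lra).
  destruct (INR_unbounded ((K + 1) ^ 2)) as [n0 Hn0].
  exists n0. intros N i HN Hi HM.
  apply le_INR in HN. apply le_INR in Hi.
  assert (HsN : K + 1 <= sqrt (INR N)).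
  { rewrite <- (sqrt_pow2 (K + 1)) by lra. apply sqrt_le_1_alt. lra. }
  assert (HiM : INR i <= INR N - sqrt (INR N) + 1).
  { apply IZR_le in HM. rewrite <- INR_IZR_INZ in HM. unfold M2 in HM.
    rewrite plus_IZR in HM. destruct (base_Int_part (INR N - sqrt (INR N))). lra. }
  assert (HiK : K + 1 <= INR i) by (assert ((K+1) <= (K+1)^2) by nra; lra).
  assert (HiN : (i < N)%nat) by (apply INR_lt; lra).
  assert (HNi : K <= INR (N - i)) by (rewrite minus_INR by lia; lra).
  assert (HNK : K <= INR N) by lra.
  assert (Hak : (alpha <= i)%nat) by (apply INR_le; apply le_INR in Halpha; lra).
  assert (Hkai : (k - alpha <= N - i)%nat).
  { apply INR_le. assert (H := le_INR _ _ (Nat.le_sub_l k alpha)). lra. }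
  assert (Hi0 : (0 < i)%nat) by (apply INR_lt; simpl; lra).
  destruct (Qd d (INR N) k k Hd0 HNK (Nat.le_refl k)) as [w1 w2].
  destruct (Qd d (INR i) k alpha Hd0 ltac:(unfold K in HiK; lra) Halpha) as [u1 u2].
  destruct (Qd d (INR (N - i)) k (k - alpha) Hd0 HNi (Nat.le_sub_l k alpha)) as [v1 v2].
  rewrite ratio_eq by (lia || lra).
  apply (combine _ _ _ d); auto.
Qed.
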